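(* Let $A$ be an associative algebra and $\{ r_\alpha \}_{\alpha \in \Omega}\subset A\otimes A$ a skew-symmetric associative Yang-Baxter family of type-II, with $r_\alpha=\sum r^{(1)}_\alpha\otimes r^{(2)}_\alpha$. Then the collection $\{ T_\alpha : A^{*} \to A \}_{\alpha \in \Omega}$, $T_\alpha(f) = \sum f (r^{(2)}_\alpha ) r^{(1)}_\alpha$, is an $\mathcal{O}$-operator family on the coadjoint bimodule $A^*$ over $A$, i.e. $T_\alpha(f)\cdot T_\beta(g) = T_{\alpha\beta}\big(T_\alpha(f)\cdot g + f\cdot T_\beta(g)\big)$ for all $f,g\in A^*$, $\alpha,\beta\in\Omega$.
   Context: $\Omega$ is a semigroup. For $r_\alpha=\sum r^{(1)}_\alpha\otimes r^{(2)}_\alpha\in A^{\otimes 2}$ set $r^{12}_\alpha = \sum r^{(1)}_\alpha \otimes r^{(2)}_\alpha \otimes 1$, $r^{13}_\alpha = \sum r^{(1)}_\alpha \otimes 1 \otimes r^{(2)}_\alpha$, $r^{23}_\alpha = \sum 1 \otimes r^{(1)}_\alpha \otimes r^{(2)}_\alpha$ in $A^{\otimes 3}$ (or $(A^+)^{\otimes 3}$, $A^+ = A\oplus\mathbf{k}$ the unitization, if $A$ is non-unital), with componentwise product. $\{r_\alpha\}$ is an associative Yang-Baxter family of type-II if $r^{13}_\alpha r^{12}_\beta - r^{12}_{\alpha \beta} r^{23}_\alpha + r^{23}_\beta r^{13}_{\alpha \beta}=0$ for all $\alpha,\beta\in\Omega$; it is skew-symmetric if $\sum r^{(1)}_\alpha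 \otimes r^{(2)}_\alpha = -\sum r^{(2)}_\alpha \otimes r^{(1)}_\alpha$ for each $\alpha$. The coadjoint $A$-bimodule $A^*$ has actions $(a \cdot f)(b)=f(b \cdot a)$ and $(f \cdot a)(b)=f(a \cdot b)$. *)

(* Defs.v *)
From HB Require Import structures.
From mathcomp Require Import all_boot all_order all_algebra.
Set Implicit Arguments. Unset Strict Implicit. Unset Printing Implicit Defensive.
Import GRing.Theory.
Local Open Scope ring_scope.

Definition is_linear (K : fieldType) (U V : lmodType K) (f : U -> V) : Prop :=
  forall (c : K) (x y : U), f (c *: x + y) = c *: f x + f y.

Definition bilinear_map (K : fieldType) (A W : lmodType K) (phi : A -> A -> W) : Prop :=
  (forall a, is_linear (phi a)) /\ (forall b, is_linear (fun a => phi a b)).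

Definition trilinear_map (K : fieldType) (A W : lmodType K)
    (phi : A -> A -> A -> W) : Prop :=
  (forall a b, is_linear (phi a b)) /\ (forall a c, is_linear (fun b => phi a b c))
  /\ (forall b c, is_linear (fun a => phi a b c)).

Definition assoc_algebra (K : fieldType) (A : lmodType K) (mul : A -> A -> A) : Prop :=
  bilinear_map mul /\ (forall a b c, mul a (mul b c) = mul (mul a b) c).

Definition semigroup (Omega : Type) (op : Omega -> Omega -> Omega) : Prop :=
  forall x y z, op x (op y z) = op (op x y) z.

(* An element of A (x) A is given by a finite sum of pure tensors
   sum_i a_i (x) b_i, i.e. a list of pairs (a_i, b_i).  Equality in the tensor
   product is expressed by its universal property: a formal combination
   sum_i c_i a_i (x) b_i (x) d_i vanishes in A (x) A (x) A iff every trilinear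
   map sends it to 0. *)
Definition tensor2_zero (K : fieldType) (A : lmodType K) (s : seq (K * (A * A))) : Prop :=
  forall (W : lmodType K) (phi : A -> A -> W), bilinear_map phi ->
    \sum_(x <- s) x.1 *: phi x.2.1 x.2.2 = 0.

Definition tensor3_zero (K : fieldType) (A : lmodType K)
    (s : seq (K * (A * A * A))) : Prop :=
  forall (W : lmodType K) (phi : A -> A -> A -> W), trilinear_map phi ->
    \sum_(x <- s) x.1 *: phi x.2.1.1 x.2.1.2 x.2.2 = 0.

Definition skew_symmetric (K : fieldType) (A : lmodType K) (r : seq (A * A)) : Prop :=
  tensor2_zero ([seq (1, p) | p <- r] ++ [seq (1, (p.2, p.1)) | p <- r]).

(* r13_a r12_b - r12_(ab) r23_a + r23_b r13_(ab) = 0, with the products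
   computed componentwise (all terms lie in A (x) A (x) A):
   (a (x) 1 (x) b)(c (x) d (x) 1) = ac (x) d (x) b,
   (a (x) b (x) 1)(1 (x) c (x) d) = a (x) bc (x) d,
   (1 (x) c (x) d)(e (x) 1 (x) f) = e (x) c (x) df. *)
Definition AYB_family_II (K : fieldType) (A : lmodType K) (mul : A -> A -> A)
    (Omega : Type) (op : Omega -> Omega -> Omega) (r : Omega -> seq (A * A)) : Prop :=
  forall alpha beta : Omega,
    tensor3_zero
      ([seq (1, (mul p.1 q.1, q.2, p.2)) | p <- r alpha, q <- r beta]
       ++ [seq (-1, (p.1, mul p.2 q.1, q.2)) | p <- r (op alpha beta), q <- r alpha]
       ++ [seq (1, (q.1, p.1, mul p.2 q.2)) | p <- r beta, q <- r (op alpha beta)]).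

Definition Top (K : fieldType) (A : lmodType K) (r : seq (A * A)) (f : A -> K) : A :=
  \sum_(p <- r) f p.2 *: p.1.

Definition coad_left (K : fieldType) (A : lmodType K) (mul : A -> A -> A)
    (a : A) (f : A -> K) : A -> K := fun b => f (mul b a).
Definition coad_right (K : fieldType) (A : lmodType K) (mul : A -> A -> A)
    (f : A -> K) (a : A) : A -> K := fun b => f (mul a b).

(* Main.v *)
Require Import Defs.
From HB Require Import structures.
From mathcomp Require Import all_boot all_order all_algebra.
Import GRing.Theory.
Local Open Scope ring_scope.

Section Lin.
Variables (K : fieldType) (A V : lmodType K) (h : A -> V).
Hypothesis hl : is_linear h.
Lemma lin0 : h 0 = 0.
Proof.
have := hl 1 0 0; rewrite !scale1r addr0 => /(congr1 (fun z => z - h 0)).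
by rewrite addrK subrr.
Qed.
Lemma linD x y : h (x + y) = h x + h y.
Proof. by have := hl 1 x y; rewrite !scale1r. Qed.
Lemma linZ c x : h (c *: x) = c *: h x.
Proof. by have := hl c x 0; rewrite !addr0 lin0 addr0. Qed.
Lemma lin_sum I (s : seq I) F : h (\sum_(i <- s) F i) = \sum_(i <- s) h (F i).
Proof.
elim: s => [|a s IH]; first by rewrite !big_nil lin0.
by rewrite !big_cons linD IH.
Qed.
End Lin.
Arguments lin0 {K A V h}. Arguments linD {K A V h}. Arguments linZ {K A V h}. Arguments lin_sum {K A V h}.

Section FLin.
Variables (K : fieldType) (A : lmodType K) (f : A -> K).
Hypothesis hl : is_linear (f : A -> K^o).
Lemma flinD x y : f (x + y) = f x + f y.
Proof. exact (linD hl x y). Qed.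
Lemma flinZ c x : f (c *: x) = c * f x.
Proof. exact (linZ hl c x). Qed.
Lemma flin_sum I (s : seq I) F : f (\sum_(i <- s) F i) = \sum_(i <- s) f (F i).
Proof. exact (lin_sum hl _ s F). Qed.
End FLin.
Arguments flinD {K A f}. Arguments flinZ {K A f}. Arguments flin_sum {K A f}.

Theorem proposition2p21 (K : fieldType) (A : lmodType K) (mul : A -> A -> A)
    (Omega : Type) (op : Omega -> Omega -> Omega) (r : Omega -> seq (A * A)) :
  assoc_algebra mul -> semigroup op ->
  AYB_family_II mul op r -> (forall alpha, skew_symmetric (r alpha)) ->
  forall (alpha beta : Omega) (f g : A -> K),
    is_linear (f : A -> K^o) -> is_linear (g : A -> K^o) ->
    mul (Top (r alpha) f) (Top (r beta) g)
    = Top (r (op alpha beta))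
        (fun b => coad_left mul (Top (r alpha) f) g b
                  + coad_right mul f (Top (r beta) g) b).
Proof.
move=> [[mulr mull] _] _ HY Hs alpha beta f g hf hg.
have H := HY alpha beta A (fun u v w => (f w * g v) *: u).
have Hs' := Hs beta A (fun u v => \sum_(q <- r (op alpha beta)) (f (mul v q.2) * g u) *: q.1).
rewrite !big_cat /= !big_allpairs_dep /= !big_map /= in H Hs'.
have ml a : is_linear (mul^~ a) by [].
have mr a : is_linear (mul a) by [].
have /H {H} : trilinear_map (fun u v w : A => (f w * g v) *: u).
  split; [|split] => a b c x y /=.
  - by rewrite (flinD hf) (flinZ hf) mulrDl scalerDl -mulrA scalerA.
  - by rewrite (flinD hg) (flinZ hg) mulrDr scalerDl mulrCA scalerA.
  - by rewrite scalerDr !scalerA mulrC.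
have /Hs' {Hs'} : bilinear_map (fun u v : A =>
       \sum_(q <- r (op alpha beta)) (f (mul v q.2) * g u) *: q.1).
  split => a0 c x y /=.
  - rewrite scaler_sumr -big_split /=; apply: eq_bigr => q _.
    by rewrite (linD (ml _)) (linZ (ml _)) (flinD hf) (flinZ hf) mulrDl scalerDl -mulrA scalerA.
  - rewrite scaler_sumr -big_split /=; apply: eq_bigr => q _.
    by rewrite (flinD hg) (flinZ hg) mulrDr scalerDl mulrCA scalerA.
have mL b (s : seq (A * A)) (F : A * A -> A) :
  mul (\sum_(i <- s) F i) b = \sum_(i <- s) mul (F i) b by exact (lin_sum (ml b) _ s F).
have mR b (s : seq (A * A)) (F : A * A -> A) :
  mul b (\sum_(i <- s) F i) = \sum_(i <- s) mul b (F i) by exact (lin_sum (mr b) _ s F).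
have mLZ b c x : mul (c *: x) b = c *: mul x b by exact (linZ (ml b) c x).
have mRZ b c x : mul b (c *: x) = c *: mul b x by exact (linZ (mr b) c x).
have e1 (I J : Type) (s : seq I) (t : seq J) (F : I -> J -> A) :
  \sum_(i <- s) \sum_(j <- t) 1 *: F i j = \sum_(i <- s) \sum_(j <- t) F i j.
  by apply: eq_bigr => i _; apply: eq_bigr => j _; rewrite scale1r.
have e2 (I J : Type) (s : seq I) (t : seq J) (F : I -> J -> A) :
  \sum_(i <- s) \sum_(j <- t) (-1) *: F i j = \sum_(i <- s) \sum_(j <- t) - F i j.
  by apply: eq_bigr => i _; apply: eq_bigr => j _; rewrite scaleN1r.
have e0 (I : Type) (s : seq I) (F : I -> A) :
  \sum_(i <- s) 1 *: F i = \sum_(i <- s) F i.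
  by apply: eq_bigr => i _; rewrite scale1r.
move=> Hs' H.
rewrite !e0 in Hs'.
rewrite !e1 e2 in H.
have e3 (I J : Type) (s : seq I) (t : seq J) (F : I -> J -> A) :
  \sum_(i <- s) \sum_(j <- t) - F i j = - \sum_(i <- s) \sum_(j <- t) F i j.
  by rewrite -sumrN; apply: eq_bigr => i _; rewrite sumrN.
rewrite e3 in H.
move/eqP: Hs'; rewrite addr_eq0 => /eqP Hs'.
rewrite Hs' in H.
move/eqP: H; rewrite addr_eq0 opprD !opprK => /eqP H.
have -> : mul (Top (r alpha) f) (Top (r beta) g) =
  \sum_(i <- r alpha) \sum_(j <- r beta) (f i.2 * g j.2) *: mul i.1 j.1.
  rewrite /Top mL; apply: eq_bigr => p _; rewrite mLZ mR scaler_sumr.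
  apply: eq_bigr => q _; rewrite mRZ; by rewrite scalerA.
apply: (eq_trans H); rewrite /Top /coad_left /coad_right.
under [RHS]eq_bigr do rewrite scalerDl mR (flin_sum hg) mL (flin_sum hf) !scaler_suml.
rewrite big_split /=; congr (_ + _).
- apply: eq_bigr => p _; apply: eq_bigr => q _.
  by rewrite mRZ (flinZ hg).
- rewrite exchange_big /=; apply: eq_bigr => p _; apply: eq_bigr => q _.
  by rewrite mLZ (flinZ hf) mulrC.
Qed.
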